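(* Let $|\psi\rangle\in H_A\otimes H_B$ be a unit vector in a finite-dimensional bipartite Hilbert space, $\rho=|\psi\rangle\langle\psi|$, and $\rho_A=\mathrm{Tr}_B\rho$, $\rho_B=\mathrm{Tr}_A\rho$. For density operators $\rho,\sigma$ define $D_2(\rho,\sigma)=\sqrt{2-2\,\mathrm{Tr}(\rho^{1/2}\sigma^{1/2})}$. Then $$D_2(\rho,\rho_A\otimes\rho_B)=C(\rho),\qquad\text{where } C(\rho)=\sqrt{2-2\,\mathrm{Tr}(\rho_A^2)}.$$
   Context: $\rho^{1/2}$ denotes the positive square root of a positive semidefinite operator. $C(\rho)$ is the concurrence of the pure state $\rho$. *)

(* Defs.v *)
(* Complex scalars: an arbitrary numClosedFieldType C
   (e.g. complex R for R : rcfType, or algC). *)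
From HB Require Import structures.
From mathcomp Require Import all_boot all_order all_algebra.
From mathcomp Require Import mxtens.
From Stdlib Require Import ClassicalEpsilon.
Set Implicit Arguments. Unset Strict Implicit. Unset Printing Implicit Defensive.
Import Order.TTheory GRing.Theory Num.Theory.
Local Open Scope ring_scope.

Definition adjmx (C : numClosedFieldType) m n (A : 'M[C]_(m, n)) : 'M[C]_(n, m) :=
  map_mx Num.conj A^T.

Definition psdmx (C : numClosedFieldType) n (A : 'M[C]_n) : Prop :=
  adjmx A = A /\ forall x : 'cV[C]_n, 0 <= (adjmx x *m A *m x) 0 0.

Definition psd_sqrtmx (C : numClosedFieldType) n (A : 'M[C]_n) : 'M[C]_n :=
  epsilon (inhabits 0) (fun S => psdmx S /\ S *m S = A).

(* partial traces on H_A (x) H_B = C^m (x) C^n, indices via mxtens_index,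
   consistent with the Kronecker product tensmx ( *t ) *)
Definition ptraceB (C : numClosedFieldType) m n (rho : 'M[C]_(m * n)) : 'M[C]_m :=
  \matrix_(i, i') \sum_(j < n) rho (mxtens_index (i, j)) (mxtens_index (i', j)).
Definition ptraceA (C : numClosedFieldType) m n (rho : 'M[C]_(m * n)) : 'M[C]_n :=
  \matrix_(j, j') \sum_(i < m) rho (mxtens_index (i, j)) (mxtens_index (i, j')).

Definition D2 (C : numClosedFieldType) n (rho sigma : 'M[C]_n) : C :=
  sqrtC (2 - 2 * \tr (psd_sqrtmx rho *m psd_sqrtmx sigma)).

Definition concurrence (C : numClosedFieldType) m n (rho : 'M[C]_(m * n)) : C :=
  sqrtC (2 - 2 * \tr (ptraceB rho *m ptraceB rho)).

(* Main.v *)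
Require Import Defs.
From HB Require Import structures.
From mathcomp Require Import all_boot all_order all_algebra.
From mathcomp Require Import mxtens spectral ring.
From Stdlib Require Import ClassicalEpsilon.
Set Implicit Arguments. Unset Strict Implicit. Unset Printing Implicit Defensive.
Import Order.TTheory GRing.Theory Num.Theory.
Local Open Scope ring_scope.

Section Aux.
Variable C : numClosedFieldType.

Lemma adjmxK m n (A : 'M[C]_(m, n)) : adjmx (adjmx A) = A.
Proof. by apply/matrixP => i j; rewrite !mxE conjCK. Qed.

Lemma adjmxM m n p (A : 'M[C]_(m, n)) (B : 'M[C]_(n, p)) :
  adjmx (A *m B) = adjmx B *m adjmx A.
Proof. by rewrite /adjmx trmx_mul map_mxM. Qed.

Lemma adjmxD m n (A B : 'M[C]_(m, n)) : adjmx (A + B) = adjmx A + adjmx B.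
Proof. by rewrite /adjmx linearD /= map_mxD. Qed.

Lemma adjmxN m n (A : 'M[C]_(m, n)) : adjmx (- A) = - adjmx A.
Proof. by rewrite /adjmx linearN /= map_mxN. Qed.

Lemma adjmx1 n : adjmx (1%:M : 'M[C]_n) = 1%:M.
Proof. by rewrite /adjmx trmx1 map_mx1. Qed.

Lemma adjmx_tens m n p q (A : 'M[C]_(m, n)) (B : 'M[C]_(p, q)) :
  adjmx (A *t B) = adjmx A *t adjmx B.
Proof. by apply/matrixP => i j; rewrite !mxE rmorphM. Qed.

Lemma form_ge0 n (A : 'M[C]_n) (x : 'cV[C]_n) : psdmx A -> 0 <= (adjmx x *m A *m x) 0 0.
Proof. by case=> _; apply. Qed.

Lemma psd_conj k n (A : 'M[C]_n) (Q : 'M[C]_(k, n)) :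
  psdmx A -> psdmx (Q *m A *m adjmx Q).
Proof.
move=> [hA fA]; split.
  by rewrite !adjmxM adjmxK hA mulmxA.
move=> x; have := fA (adjmx Q *m x).
by rewrite adjmxM adjmxK !mulmxA.
Qed.

Lemma psd_ge0_diag n (A : 'M[C]_n) i : psdmx A -> 0 <= A i i.
Proof.
move=> pA; have := form_ge0 (delta_mx i (0 : 'I_1)) pA.
rewrite -mulmxA -colE /adjmx trmx_delta.
suff -> : map_mx Num.conj (delta_mx (0:'I_1) i) = delta_mx 0 i :> 'M[C]_(1, n).
  by rewrite -rowE !mxE.
by apply/matrixP => a b; rewrite !mxE rmorph_nat.
Qed.

Lemma form_diag n (d : 'rV[C]_n) (x : 'cV[C]_n) :
  (adjmx x *m diag_mx d *m x) 0 0 = \sum_i d 0 i * (x i 0 * (x i 0)^*).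
Proof.
rewrite mul_mx_diag !mxE; apply: eq_bigr => i _; rewrite !mxE; idtac.
by ring.
Qed.

Lemma psd_diag n (d : 'rV[C]_n) : (forall i, 0 <= d 0 i) -> psdmx (diag_mx d).
Proof.
move=> d0; split.
  apply/matrixP => i j; rewrite !mxE eq_sym; case: eqP => [->|_].
    by rewrite !mulr1n geC0_conj.
  by rewrite !mulr0n rmorph0.
move=> x; rewrite form_diag; apply: sumr_ge0 => i _.
by apply: mulr_ge0 => //; apply: mul_conjC_ge0.
Qed.

Lemma form_diag_eq0 n (d : 'rV[C]_n) (x : 'cV[C]_n) :
  (forall i, 0 <= d 0 i) -> (adjmx x *m diag_mx d *m x) 0 0 = 0 ->
  diag_mx d *m x = 0.
Proof.
move=> d0; rewrite form_diag => /psumr_eq0P H.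
apply/matrixP => i j; rewrite [j]ord1 mul_diag_mx !mxE.
have /eqP := H (fun i _ => mulr_ge0 (d0 i) (mul_conjC_ge0 _)) i isT.
by rewrite mulf_eq0 mul_conjC_eq0 => /orP[]/eqP->; rewrite ?mul0r ?mulr0.
Qed.

Lemma adj_mul_eq0 m n (X : 'M[C]_(m, n)) : adjmx X *m X = 0 -> X = 0.
Proof.
move=> /matrixP H; apply/matrixP => i j; have := H j j; rewrite !mxE.
move=> /psumr_eq0P h.
have /eqP : adjmx X j i * X i j = 0.
  by apply: h i isT => k _; rewrite !mxE mulrC mul_conjC_ge0.
by rewrite !mxE mulrC mul_conjC_eq0 => /eqP.
Qed.


Lemma conjM n (P X Y : 'M[C]_n) : adjmx P *m P = 1%:M ->
  (P *m X *m adjmx P) *m (P *m Y *m adjmx P) = P *m (X *m Y) *m adjmx P.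
Proof.
move=> uP'; rewrite !mulmxA; congr (_ *m _).
by rewrite -[P *m X *m adjmx P *m P]mulmxA uP' mulmx1.
Qed.

Lemma psd_sqrt_uniq n (S T : 'M[C]_n) :
  psdmx S -> psdmx T -> S *m S = T *m T -> S = T.
Proof.
move=> pS pT eST.
have nS : S \is normalmx.
  by apply/normalmxP; have := pS.1; rewrite /adjmx => ->.
have uP : spectralmx S *m adjmx (spectralmx S) = 1%:M.
  exact: (unitarymxP (spectral_unitarymx S)).
have eS := orthomx_spectralP nS.
move: eS; rewrite invmx_unitary ?spectral_unitarymx //.
set P := spectralmx S in uP *; set d := spectral_diag S => eS.
have uP' : adjmx P *m P = 1%:M := mulmx1C uP.
set D := diag_mx d.
have eD : D = P *m S *m adjmx P.
  by rewrite eS !mulmxA uP mul1mx -mulmxA uP mulmx1.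
have pD : psdmx D by rewrite eD; apply: psd_conj.
have d0 : forall i, 0 <= d 0 i.
  by move=> i; have := psd_ge0_diag i pD; rewrite /D mxE eqxx mulr1n.
set T' := P *m T *m adjmx P.
have pT' : psdmx T' by apply: psd_conj.
have defT' : P *m T *m adjmx P = T' by [].
clearbody T'.
have eT'2 : T' *m T' = D *m D.
  by rewrite -defT' eD !conjM // eST.
have cT'D2 : T' *m (D *m D) = D *m D *m T' by rewrite -eT'2 mulmxA.
have cT'D : T' *m D = D *m T'.
  apply/matrixP => i j; move/matrixP: cT'D2 => /(_ i j).
  rewrite /D mulmx_diag !mul_mx_diag !mul_diag_mx !mxE.
  have [->|nz] := eqVneq (T' i j) 0; first by rewrite !mulr0 !mul0r.
  move=> h; have h2 : d 0 j * d 0 j = d 0 i * d 0 i.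
    by apply: (mulfI nz); rewrite h mulrC.
  have : d 0 j ^+ 2 == d 0 i ^+ 2 by rewrite !expr2 h2.
  by rewrite eqrXn2 // => /eqP ->; rewrite mulrC.
set H := D - T'.
have GH : (D + T') *m H = 0.
  rewrite /H mulmxDl !mulmxBr eT'2 cT'D.
  by rewrite addrA subrK subrr.
have hH : adjmx H = H by rewrite /H adjmxD adjmxN pD.1 pT'.1.
have DH0 : D *m H = 0.
  apply/matrixP => i j.
  set x := H *m delta_mx j (0 : 'I_1).
  have hx : (adjmx x *m D *m x) 0 0 = 0.
    have a0 := form_ge0 x pD; have b0 := form_ge0 x pT'.
    have : (adjmx x *m D *m x) 0 0 + (adjmx x *m T' *m x) 0 0 = 0.
      have e : adjmx x *m (D + T') *m x = 0.
        rewrite /x adjmxM hH.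
        by rewrite -!mulmxA [(D + T') *m (H *m _)]mulmxA GH mul0mx !mulmx0.
      by move/matrixP: e => /(_ 0 0); rewrite mulmxDr mulmxDl !mxE.
    by move/eqP; rewrite paddr_eq0 // => /andP[/eqP -> _].
  have := form_diag_eq0 d0 hx; rewrite /x mulmxA -colE => /matrixP /(_ i 0).
  by rewrite !mxE.
have T'H0 : T' *m H = 0 by move: GH; rewrite mulmxDl DH0 add0r.
have HH0 : H *m H = 0 by rewrite {1}/H mulmxBl DH0 T'H0 subr0.
have H0 : H = 0 by apply: adj_mul_eq0; rewrite hH.
have eT' : T' = D by move/eqP: H0; rewrite subr_eq0 => /eqP.
have : adjmx P *m T' *m P = T.
  by rewrite -defT' !mulmxA uP' mul1mx -mulmxA uP' mulmx1.
by rewrite eT' eD !mulmxA uP' mul1mx -mulmxA uP' mulmx1.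
Qed.


Lemma psd_sqrtmx_eq n (A S : 'M[C]_n) :
  psdmx S -> S *m S = A -> psd_sqrtmx A = S.
Proof.
move=> pS eS; rewrite /psd_sqrtmx.
have [p e] := epsilon_spec (inhabits 0) (fun S => psdmx S /\ S *m S = A)
   (ex_intro _ S (conj pS eS)).
by apply: psd_sqrt_uniq => //; rewrite e eS.
Qed.

Lemma psd_gram m n (X : 'M[C]_(m, n)) : psdmx (X *m adjmx X).
Proof.
split; first by rewrite adjmxM adjmxK.
move=> x; rewrite mulmxA -mulmxA.
have -> : adjmx x *m X = adjmx (adjmx X *m x) by rewrite adjmxM adjmxK.
set y := adjmx X *m x.
rewrite !mxE; apply: sumr_ge0 => i _; rewrite !mxE mulrC.
exact: mul_conjC_ge0.
Qed.

Lemma psd_spectral n (A : 'M[C]_n) : psdmx A ->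
  exists P (d : 'rV[C]_n), [/\ P *m adjmx P = 1%:M, adjmx P *m P = 1%:M,
    (forall i, 0 <= d 0 i) & A = adjmx P *m diag_mx d *m P].
Proof.
move=> pA.
have nA : A \is normalmx.
  by apply/normalmxP; have := pA.1; rewrite /adjmx => ->.
have uP : spectralmx A *m adjmx (spectralmx A) = 1%:M.
  exact: (unitarymxP (spectral_unitarymx A)).
have eA := orthomx_spectralP nA.
move: eA; rewrite invmx_unitary ?spectral_unitarymx //.
set P := spectralmx A in uP *; set d := spectral_diag A => eA.
have uP' : adjmx P *m P = 1%:M := mulmx1C uP.
exists P, d; split => // i.
have eD : diag_mx d = P *m A *m adjmx P.
  by rewrite eA !mulmxA uP mul1mx -mulmxA uP mulmx1.
have pD : psdmx (diag_mx d) by rewrite eD; apply: psd_conj.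
by have := psd_ge0_diag i pD; rewrite mxE eqxx mulr1n.
Qed.


Definition vec m n (M : 'M[C]_(m, n)) : 'cV[C]_(m * n) :=
  \col_k M (mxtens_unindex k).1 (mxtens_unindex k).2.

Lemma vecE m n (M : 'M[C]_(m, n)) i j : vec M (mxtens_index (i, j)) 0 = M i j.
Proof. by rewrite mxE mxtens_indexK. Qed.

Lemma sum_tens m n (F : 'I_(m * n) -> C) :
  \sum_k F k = \sum_i \sum_j F (mxtens_index (i, j)).
Proof.
rewrite pair_big /= (reindex (@mxtens_index m n)) /=.
  by apply: eq_bigr => -[i j].
by exists (@mxtens_unindex m n) => x _; [apply: mxtens_indexK | apply: mxtens_unindexK].
Qed.

Lemma tens_vec p q m n (X : 'M[C]_(p, m)) (Y : 'M[C]_(q, n)) (M : 'M[C]_(m, n)) :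
  (X *t Y) *m vec M = vec (X *m M *m Y^T).
Proof.
apply/matrixP => k z; rewrite [z]ord1; case: (mxtens_indexP k) => i j.
rewrite vecE [LHS]mxE sum_tens.
transitivity (\sum_i0 \sum_j0 X i i0 * Y j j0 * M i0 j0).
  by apply: eq_bigr => i0 _; apply: eq_bigr => j0 _; rewrite tensmxE vecE.
rewrite mxE exchange_big; apply: eq_bigr => j0 _; rewrite mxE mulr_suml.
by apply: eq_bigr => i0 _; rewrite !mxE; ring.
Qed.

Lemma vec_dot m n (M N : 'M[C]_(m, n)) :
  (adjmx (vec M) *m vec N) 0 0 = \sum_i \sum_j (M i j)^* * N i j.
Proof.
rewrite mxE sum_tens; apply: eq_bigr => i _; apply: eq_bigr => j _.
by rewrite !mxE mxtens_indexK.
Qed.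


Lemma tens_diag m n (d : 'rV[C]_m) (e : 'rV[C]_n) :
  diag_mx d *t diag_mx e =
  diag_mx (\row_k (d 0 (mxtens_unindex k).1 * e 0 (mxtens_unindex k).2)).
Proof.
apply/matrixP => k l; case: (mxtens_indexP k) => i j.
case: (mxtens_indexP l) => i' j'.
rewrite tensmxE !mxE mxtens_indexK.
rewrite (inj_eq (can_inj (@mxtens_indexK m n))) xpair_eqE.
by case: (i =P i') => _; case: (j =P j') => _;
  rewrite ?mulr1n ?mulr0n ?mulr0 ?mul0r.
Qed.

Lemma tr_unitary n (Q : 'M[C]_n) : adjmx Q *m Q = 1%:M ->
  Q^T *m adjmx (Q^T) = 1%:M.
Proof.
move=> h; have := congr1 trmx h; rewrite trmx_mul trmx1 => <-.
by rewrite /adjmx map_trmx !trmxK.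
Qed.

Lemma adj_tr m n (N : 'M[C]_(m, n)) : (adjmx (N^T))^T = adjmx N.
Proof. by rewrite /adjmx map_trmx trmxK. Qed.

End Aux.

Theorem mainTheorem3 (C : numClosedFieldType) (m n : nat)
    (psi : 'cV[C]_(m * n)) :
  adjmx psi *m psi = 1%:M ->
  let rho := psi *m adjmx psi in
  D2 rho (ptraceB rho *t ptraceA rho) = concurrence rho.
Proof.
move=> hpsi rho.
set M : 'M[C]_(m, n) := \matrix_(i, j) psi (mxtens_index (i, j)) 0.
have epsi : psi = vec M.
  apply/matrixP => k z; rewrite [z]ord1; case: (mxtens_indexP k) => i j.
  by rewrite vecE mxE.
have erho : forall k l, rho k l = psi k 0 * (psi l 0)^*.
  by move=> k l; rewrite /rho mxE big_ord1 !mxE.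
have eA : ptraceB rho = M *m adjmx M.
  apply/matrixP => i i'; rewrite !mxE; apply: eq_bigr => j _.
  by rewrite erho !mxE.
have eB : ptraceA rho = M^T *m adjmx M^T.
  apply/matrixP => j j'; rewrite !mxE; apply: eq_bigr => i _.
  by rewrite erho !mxE.
rewrite /D2 /concurrence eA eB.
set A := M *m adjmx M; set B := M^T *m adjmx M^T.
have pA : psdmx A := psd_gram M.
have pB : psdmx B := psd_gram M^T.
have [P [a [uP uP' a0 eAs]]] := psd_spectral pA.
have [Q [b [uQ uQ' b0 eBs]]] := psd_spectral pB.
set sa := map_mx sqrtC a; set sb := map_mx sqrtC b.
have sa0 : forall i, 0 <= sa 0 i by move=> i; rewrite mxE sqrtC_ge0.
have sb0 : forall i, 0 <= sb 0 i by move=> i; rewrite mxE sqrtC_ge0.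
set SA := adjmx P *m diag_mx sa *m P.
set SB := adjmx Q *m diag_mx sb *m Q.
have pSA : psdmx SA.
  by have := psd_conj (adjmx P) (psd_diag sa0); rewrite adjmxK.
have pSB : psdmx SB.
  by have := psd_conj (adjmx Q) (psd_diag sb0); rewrite adjmxK.
have SA2 : SA *m SA = A.
  rewrite /SA; have := conjM (diag_mx sa) (diag_mx sa) (P := adjmx P).
  rewrite adjmxK => -> //; rewrite eAs mulmx_diag; congr (_ *m diag_mx _ *m _).
  by apply/matrixP => i j; rewrite !mxE [i]ord1 -expr2 sqrtCK.
have SB2 : SB *m SB = B.
  rewrite /SB; have := conjM (diag_mx sb) (diag_mx sb) (P := adjmx Q).
  rewrite adjmxK => -> //; rewrite eBs mulmx_diag; congr (_ *m diag_mx _ *m _).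
  by apply/matrixP => i j; rewrite !mxE [i]ord1 -expr2 sqrtCK.
set T := SA *t SB.
have eT : T = adjmx (P *t Q) *m (diag_mx sa *t diag_mx sb) *m (P *t Q).
  by rewrite adjmx_tens !tensmx_mul.
have pT : psdmx T.
  rewrite eT tens_diag.
  have := psd_conj (adjmx (P *t Q)) (psd_diag (d := \row_k (sa 0 (mxtens_unindex k).1 * sb 0 (mxtens_unindex k).2)) _).
  rewrite adjmxK; apply => i; rewrite mxE; exact: mulr_ge0.
have T2 : T *m T = A *t B by rewrite tensmx_mul SA2 SB2.
have rho_psd : psdmx rho := psd_gram psi.
have rho2 : rho *m rho = rho.
  by rewrite /rho mulmxA -[psi *m _ *m psi]mulmxA hpsi mulmx1.
rewrite (psd_sqrtmx_eq rho_psd rho2) (psd_sqrtmx_eq pT T2).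
congr (sqrtC (2 - 2 * _)).
have -> : \tr (rho *m T) = (adjmx psi *m T *m psi) 0 0.
  by rewrite /rho -mulmxA mxtrace_mulC /mxtrace big_ord1.
set N := P *m M *m Q^T.
rewrite eT !mulmxA -adjmxM -mulmxA -mulmxA epsi !tens_vec -/N vec_dot.
have NN : N *m adjmx N = diag_mx a.
  rewrite /N !adjmxM !mulmxA -[P *m M *m Q^T *m adjmx Q^T]mulmxA tr_unitary //.
  rewrite mulmx1 -[P *m M *m adjmx M]mulmxA -/A eAs !mulmxA uP mul1mx.
  by rewrite -mulmxA uP mulmx1.
have NtN : adjmx N *m N = diag_mx b.
  have h : N^T *m adjmx N^T = diag_mx b.
    rewrite /N !trmx_mul trmxK !adjmxM !mulmxA.
    rewrite -[Q *m M^T *m P^T *m adjmx P^T]mulmxA tr_unitary //.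
    rewrite mulmx1 -[Q *m M^T *m adjmx M^T]mulmxA -/B eBs !mulmxA uQ mul1mx.
    by rewrite -mulmxA uQ mulmx1.
  by have := congr1 trmx h; rewrite trmx_mul trmxK adj_tr tr_diag_mx.
clearbody N.
have key : diag_mx a *m N = N *m diag_mx b.
  by rewrite -NN -NtN mulmxA.
have keyij : forall i j, a 0 i * N i j = N i j * b 0 j.
  move=> i j; move/matrixP: key => /(_ i j).
  by rewrite mul_mx_diag mul_diag_mx !mxE.
transitivity (\sum_i a 0 i * a 0 i).
  apply: eq_bigr => i _.
  transitivity (\sum_j a 0 i * (N i j * (N i j)^* )).
    apply: eq_bigr => j _; rewrite tr_diag_mx mul_mx_diag mul_diag_mx !mxE.
    have [->|nz] := eqVneq (N i j) 0; first by rewrite rmorph0 !mul0r !mulr0.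
    have eab : b 0 j = a 0 i by apply: (mulfI nz); rewrite -keyij mulrC.
    have h := sqrtCK (a 0 i); rewrite expr2 in h.
    by rewrite eab -[in RHS]h; ring.
  rewrite -mulr_sumr; congr (_ * _).
  move/matrixP: NN => /(_ i i); rewrite !mxE eqxx mulr1n => <-.
  by apply: eq_bigr => j _; rewrite !mxE.
symmetry.
transitivity (\tr ((adjmx P *m diag_mx a *m P) *m (adjmx P *m diag_mx a *m P))).
  by rewrite -mulmxA -/A eAs.
have := conjM (diag_mx a) (diag_mx a) (P := adjmx P).
rewrite adjmxK => -> //.
rewrite mxtrace_mulC !mulmxA uP mul1mx mulmx_diag mxtrace_diag.
by apply: eq_bigr => i _; rewrite mxE.
Qed.
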